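(* Let $A$ be an order complete Banach lattice algebra, let $\Lambda$ be an index set and let $\{p_\lambda\}_{\lambda\in\Lambda}\subseteq BP_l(A)\cap BP_r(A)$ satisfy $p_\alpha p_\beta=\delta_{\alpha\beta}p_\alpha$ for all $\alpha,\beta\in\Lambda$ ($\delta_{\alpha\beta}$ the Kronecker delta). Let $\Gamma\subseteq\Lambda\times\Lambda$ be arbitrary. Then for every $x\in A_+$ the supremum $P_\Gamma(x)=\bigvee_{(\alpha,\beta)\in\Gamma}p_\alpha x p_\beta$ exists in $A$, and the map $P_\Gamma\colon A_+\to A_+$ extends to a unique band projection $P_\Gamma\colon A\to A$.
   Context: A Banach lattice algebra is a real Banach lattice $A$ equipped with an associative bilinear product making $(A,\cdot)$ a Banach algebra ($\|xy\|\le\|x\|\|y\|$) such that $xy\ge 0$ whenever $x,y\ge0$. It is order complete if every nonempty subset bounded above has a supremum. For $a\in A$, $L_a,R_a\colon A\to A$ denote the multiplication operators $L_a(x)=ax$, $R_a(x)=xa$. A band projection on a Banach lattice $X$ is an operator $P\colon X\to X$ with $P^2=P$ and $0\le P\le I_X$ (equivalently, the projection onto a projection band along its disjoint complement). $BP_l(A)=\{a\in A_+: L_a \text{ is a band projection}\}$ and $BP_r(A)=\{a\in A_+: R_a\text{ is a band projection}\}$. *)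

(* Defs.v *)
From HB Require Import structures.
From mathcomp Require Import all_boot all_order all_algebra.
From mathcomp Require Import all_classical all_reals all_analysis.
Set Implicit Arguments. Unset Strict Implicit. Unset Printing Implicit Defensive.
Import Order.TTheory GRing.Theory Num.Theory.
Import numFieldNormedType.Exports.
Local Open Scope classical_set_scope.
Local Open Scope ring_scope.

Section BLA.
Context {R : realType} {A : completeNormedModType R}.

Definition is_sup (le : A -> A -> Prop) (S : set A) (s : A) : Prop :=
  (forall y, S y -> le y s) /\
  (forall u, (forall y, S y -> le y u) -> le s u).

Definition is_linear (T : A -> A) : Prop :=
  forall (a : R) (x y : A), T (a *: x + y) = a *: T x + T y.

Record banach_lattice_algebra (le : A -> A -> Prop) (mul : A -> A -> A)
  : Prop := BLA {
  bla_refl : forall x, le x x;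
  bla_antisym : forall x y, le x y -> le y x -> x = y;
  bla_trans : forall x y z, le x y -> le y z -> le x z;
  bla_add : forall x y z, le x y -> le (x + z) (y + z);
  bla_scale : forall (a : R) x, 0 <= a -> le 0 x -> le 0 (a *: x);
  bla_lattice : forall x y, exists s, is_sup le [set x; y] s;
  bla_lattice_norm : forall x y ax ay,
      is_sup le [set x; - x] ax -> is_sup le [set y; - y] ay ->
      le ax ay -> `|x| <= `|y|;
  (* (completeness of the norm is part of completeNormedModType) *)
  bla_mulA : forall x y z, mul x (mul y z) = mul (mul x y) z;
  bla_mul_linl : forall z, is_linear (fun x => mul x z);
  bla_mul_linr : forall z, is_linear (fun x => mul z x);
  bla_mul_norm : forall x y, `|mul x y| <= `|x| * `|y|;
  bla_mul_pos : forall x y, le 0 x -> le 0 y -> le 0 (mul x y)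
}.

Definition order_complete (le : A -> A -> Prop) : Prop :=
  forall S : set A, S !=set0 -> (exists u, forall y, S y -> le y u) ->
    exists s, is_sup le S s.

Definition band_projection (le : A -> A -> Prop) (P : A -> A) : Prop :=
  is_linear P /\ (forall x, P (P x) = P x) /\
  (forall x, le 0 x -> le 0 (P x) /\ le (P x) x).

Definition BP_l (le : A -> A -> Prop) (mul : A -> A -> A) : set A :=
  [set a | le 0 a /\ band_projection le (fun x => mul a x)].

Definition BP_r (le : A -> A -> Prop) (mul : A -> A -> A) : set A :=
  [set a | le 0 a /\ band_projection le (fun x => mul x a)].

End BLA.

(* Main.v *)
Require Import Defs.
From HB Require Import structures.
From mathcomp Require Import all_boot all_order all_algebra.
From mathcomp Require Import all_classical all_reals all_analysis.
Import Order.TTheory GRing.Theory Num.Theory.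
Import numFieldNormedType.Exports.
Local Open Scope classical_set_scope.
Local Open Scope ring_scope.

Section Basic.
Context {R : realType} {A : completeNormedModType R}
  {le : A -> A -> Prop} {mul : A -> A -> A} (HA : banach_lattice_algebra le mul).

Lemma leD2 {x y u v} : le x y -> le u v -> le (x + u) (y + v).
Proof.
move=> h1 h2; apply: (@bla_trans _ _ _ _ HA _ (y + u)); first exact: (bla_add HA u h1).
rewrite (addrC y u) (addrC y v); exact: (bla_add HA y h2).
Qed.

Lemma le_subr u v t : le (u + v) t <-> le u (t - v).
Proof.
split=> h.
  by have := bla_add HA (- v) h; rewrite addrK.
by have := bla_add HA v h; rewrite subrK.
Qed.

Lemma le0sub x y : le x y <-> le 0 (y - x).
Proof. by rewrite -le_subr add0r. Qed.

Lemma leZ {c x y} : 0 <= c -> le x y -> le (c *: x) (c *: y).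
Proof.
move=> hc /le0sub h; apply/le0sub; rewrite -scalerBr; exact: (bla_scale HA hc h).
Qed.

Lemma lin0 {T : A -> A} : is_linear T -> T 0 = 0.
Proof.
move=> hT; have h := hT 1 0 0; rewrite !scale1r addr0 in h.
by apply: (@addrI _ (T 0)); rewrite addr0 -h.
Qed.

Lemma linD {T : A -> A} {x y} : is_linear T -> T (x + y) = T x + T y.
Proof. by move=> hT; have := hT 1 x y; rewrite !scale1r. Qed.

Lemma linZ {T : A -> A} {c x} : is_linear T -> T (c *: x) = c *: T x.
Proof. by move=> hT; have := hT c x 0; rewrite !addr0 (lin0 hT) addr0. Qed.

Lemma linB {T : A -> A} {x y} : is_linear T -> T (x - y) = T x - T y.
Proof.
move=> hT; rewrite linD // -scaleN1r linZ //; by rewrite scaleN1r.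
Qed.

Lemma is_sup_uniq S s s' : is_sup le S s -> is_sup le S s' -> s = s'.
Proof.
move=> h1 h2; apply: (bla_antisym HA); [apply: h1.2; exact: h2.1|apply: h2.2; exact: h1.1].
Qed.

Lemma zmodl1 (x y z w : A) : x + y = z + w -> x - w = z - y.
Proof. by move=> e; rewrite -[x](addrK y) e addrAC addrK. Qed.

Lemma zmodl2 (x y z w : A) : x - y = z - w -> x + w = z + y.
Proof. by move=> e; rewrite -[x](subrK y) e addrAC subrK. Qed.

Definition pos (le' : A -> A -> Prop) x := xget 0 (is_sup le' [set x; 0]).
Definition neg (le' : A -> A -> Prop) x := pos le' x - x.

Lemma posP x : is_sup le [set x; 0] (pos le x).
Proof. apply: xgetPex; exact: bla_lattice HA x 0. Qed.

Lemma pos_ge x : le x (pos le x).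
Proof. by apply: (posP x).1; left. Qed.

Lemma pos_ge0 x : le 0 (pos le x).
Proof. by apply: (posP x).1; right. Qed.

Lemma neg_ge0 x : le 0 (neg le x).
Proof. exact: (le0sub _ _).1 (pos_ge x). Qed.

Lemma posneg x : pos le x - neg le x = x.
Proof. by rewrite /neg opprB addrCA subrr addr0. Qed.

End Basic.

Section Main.
Context {R : realType} {A : completeNormedModType R}
  (le : A -> A -> Prop) (mul : A -> A -> A) (HA : banach_lattice_algebra le mul)
  (Hoc : order_complete le)
  (Lambda : Type) (p : Lambda -> A)
  (Hp : forall l, BP_l le mul (p l) /\ BP_r le mul (p l))
  (Horth : forall a b, mul (p a) (p b) = (if `[< a = b >] then p a else 0))
  (Gamma : set (Lambda * Lambda)).

Let refl := bla_refl HA.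
Let le0sub := le0sub HA.
Let le_subr := le_subr HA.
Let trans {x y z : A} : le x y -> le y z -> le x z := @bla_trans _ _ _ _ HA x y z.

Lemma Lpos l x : le 0 x -> le 0 (mul (p l) x) /\ le (mul (p l) x) x.
Proof. by case: (Hp l) => -[_ [_ [_ h]]] _; apply: h. Qed.
Lemma Rpos l x : le 0 x -> le 0 (mul x (p l)) /\ le (mul x (p l)) x.
Proof. by case: (Hp l) => _ [_ [_ [_ h]]]; apply: h. Qed.
Lemma Lidem l x : mul (p l) (mul (p l) x) = mul (p l) x.
Proof. by case: (Hp l) => -[_ [_ [h _]]] _; apply: h. Qed.
Lemma Ridem l x : mul (mul x (p l)) (p l) = mul x (p l).
Proof. by case: (Hp l) => _ [_ [_ [h _]]]; apply: h. Qed.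

Definition Q (ab : Lambda * Lambda) x := mul (mul (p ab.1) x) (p ab.2).

Lemma Q_lin i : is_linear (Q i).
Proof.
move=> c x y; rewrite /Q.
have := bla_mul_linr HA (p i.1) c x y => /= ->.
by have := bla_mul_linl HA (p i.2) c (mul (p i.1) x) (mul (p i.1) y) => /= ->.
Qed.

Lemma Q_pos i {x} : le 0 x -> le 0 (Q i x) /\ le (Q i x) x.
Proof.
move=> hx; have [h1 h2] := Lpos i.1 x hx; have [h3 h4] := Rpos i.2 _ h1.
split=> //; exact: trans h4 h2.
Qed.

Lemma Q_mono i {u v} : le u v -> le (Q i u) (Q i v).
Proof.
move/le0sub => h; apply/le0sub; rewrite -(linB (Q_lin i)); exact: (Q_pos i h).1.
Qed.

Lemma Q_idem i x : Q i (Q i x) = Q i x.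
Proof.
rewrite /Q (bla_mulA HA (p i.1) (mul (p i.1) x) (p i.2)) Lidem; exact: Ridem.
Qed.

Lemma mul0l z : mul 0 z = 0.
Proof. exact: (lin0 (bla_mul_linl HA z)). Qed.
Lemma mulr0 z : mul z 0 = 0.
Proof. exact: (lin0 (bla_mul_linr HA z)). Qed.

Lemma Q_orth i j x : i <> j -> Q i (Q j x) = 0.
Proof.
case: i j => a b [c d] /= hij; rewrite /Q /=.
rewrite (bla_mulA HA (p a) (mul (p c) x) (p d)) (bla_mulA HA (p a) (p c) x).
rewrite -(bla_mulA HA _ (p d) (p b)) !Horth.
have [ac|nac] := pselect (a = c).
  have nbd : d <> b by move=> e; apply: hij; rewrite ac e.
  by rewrite (asboolF nbd) mulr0.
by rewrite (asboolF nac) mul0l mul0l.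
Qed.

Lemma key2 {i j t} : le 0 t -> i <> j -> le (Q i t + Q j t) t.
Proof.
move=> ht hij; have hw : le 0 (t - Q j t) by exact: (le0sub _ _).1 (Q_pos j ht).2.
have := (Q_pos i hw).2; rewrite (linB (Q_lin i)) Q_orth // subr0 => h.
exact/le_subr.
Qed.

Definition S x := 0 |` [set mul (mul (p ab.1) x) (p ab.2) | ab in Gamma].

Lemma S0 x : S x 0.
Proof. by left. Qed.

Lemma SQ x i : Gamma i -> S x (Q i x).
Proof. by move=> gi; right; exists i. Qed.

Lemma ub x u : le 0 u -> (forall i, Gamma i -> le (Q i x) u) -> forall y, S x y -> le y u.
Proof. by move=> h0 hQ y [->|[i gi <-]] //; exact: hQ. Qed.

Lemma sup_ex x : le 0 x -> exists s, is_sup le (S x) s.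
Proof.
move=> hx; apply: Hoc; first by exists 0; exact: S0.
exists x; apply: ub => // i _; exact: (Q_pos i hx).2.
Qed.

Definition sx x := xget 0 (is_sup le (S x)).

Lemma sxP {x} : le 0 x -> is_sup le (S x) (sx x).
Proof. by move=> hx; apply: xgetPex; exact: sup_ex. Qed.

Lemma sx_ge0 {x} : le 0 x -> le 0 (sx x).
Proof. by move=> hx; apply: (sxP hx).1; exact: S0. Qed.

Lemma sx_ub {x i} : le 0 x -> Gamma i -> le (Q i x) (sx x).
Proof. by move=> hx gi; apply: (sxP hx).1; exact: SQ. Qed.

Lemma sx_least x u : le 0 x -> le 0 u -> (forall i, Gamma i -> le (Q i x) u) ->
  le (sx x) u.
Proof. by move=> hx h0 hQ; apply: (sxP hx).2; exact: ub. Qed.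

Lemma sx_le x : le 0 x -> le (sx x) x.
Proof. by move=> hx; apply: sx_least => // i _; exact: (Q_pos i hx).2. Qed.

Lemma sx0 : sx 0 = 0.
Proof.
apply: (bla_antisym HA); last exact: sx_ge0 (bla_refl HA 0).
apply: sx_least.
- exact: (bla_refl HA 0).
- apply: (bla_refl HA).
-
by move=> i _; rewrite (lin0 (Q_lin i)); exact: (bla_refl HA _).
Qed.

Lemma sxD x y : le 0 x -> le 0 y -> sx (x + y) = sx x + sx y.
Proof.
move=> hx hy.
have hxy : le 0 (x + y) by have := leD2 HA hx hy; rewrite addr0.
have hxle : le x (x + y) by have := leD2 HA (bla_refl HA x) hy; rewrite addr0.
have hyle : le y (x + y) by have := leD2 HA hx (bla_refl HA y); rewrite add0r.
apply: (bla_antisym HA).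
  apply: sx_least => //.
    by have := leD2 HA (sx_ge0 hx) (sx_ge0 hy); rewrite addr0.
  move=> i gi; rewrite (linD (Q_lin i)); apply: (leD2 HA); [exact: sx_ub hx gi|exact: sx_ub hy gi].
set t := sx (x + y).
have ht : le 0 t := sx_ge0 hxy.
have hQt i : Gamma i -> le (Q i (x + y)) (Q i t).
  by move=> gi; rewrite -[Q i (x + y)]Q_idem; apply: Q_mono; exact: sx_ub.
have hyt : le (sx y) t.
  apply: sx_least => // i gi; apply: trans (Q_mono i hyle) _; exact: sx_ub.
apply/le_subr; apply: sx_least => //; first exact: (le0sub _ _).1 hyt.
move=> i gi; apply/le_subr; rewrite addrC; apply/le_subr.
have hQx : le (Q i x) t by apply: trans (Q_mono i hxle) _; exact: sx_ub.
apply: sx_least => //; first exact: (le0sub _ _).1 hQx.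
move=> j gj; apply/le_subr; rewrite addrC.
have [<-|nij] := pselect (i = j).
  by rewrite -(linD (Q_lin i)); exact: sx_ub.
apply: trans (key2 ht nij); apply: (leD2 HA).
  exact: trans (Q_mono i hxle) (hQt i gi).
exact: trans (Q_mono j hyle) (hQt j gj).
Qed.

Lemma sxZ c x : 0 <= c -> le 0 x -> sx (c *: x) = c *: sx x.
Proof.
move=> hc hx; have [->|c0] := eqVneq c 0; first by rewrite !scale0r sx0.
have hcx : le 0 (c *: x) := bla_scale HA hc hx.
apply: (bla_antisym HA).
  apply: (sx_least _ _ hcx).
  exact: (bla_scale HA hc (sx_ge0 hx)).
  move=> i gi; rewrite (linZ (Q_lin i)); exact: (leZ HA hc (sx_ub hx gi)).
have hci : 0 <= c^-1 by rewrite invr_ge0.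
suff h : le (sx x) (c^-1 *: sx (c *: x)).
  by have := leZ HA hc h; rewrite scalerA mulfV // scale1r.
apply: (sx_least _ _ hx); first exact: (bla_scale HA hci (sx_ge0 hcx)).
move=> i gi; have -> : Q i x = c^-1 *: Q i (c *: x).
  by rewrite (linZ (Q_lin i)) scalerA mulVf // scale1r.
exact: (leZ HA hci (sx_ub hcx gi)).
Qed.

Lemma sx_idem a : le 0 a -> sx (sx a) = sx a.
Proof.
move=> ha; have hs := sx_ge0 ha; apply: (bla_antisym HA).
  apply: sx_least => // i _; exact: (Q_pos i hs).2.
apply: sx_least => //; first exact: sx_ge0.
move=> i gi; rewrite -Q_idem; apply: trans (Q_mono i (sx_ub ha gi)) _.
exact: sx_ub.
Qed.

Definition Pm x := sx (pos le x) - sx (neg le x).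

Lemma P_dec {a b} : le 0 a -> le 0 b -> Pm (a - b) = sx a - sx b.
Proof.
move=> ha hb; rewrite /Pm; apply: zmodl1.
have h1 := pos_ge0 HA (a - b); have h2 := neg_ge0 HA (a - b); rewrite -!sxD //.
congr sx; apply: zmodl2; exact: posneg.
Qed.

Lemma Pm_pos x : le 0 x -> Pm x = sx x.
Proof. by move=> hx; have := P_dec hx (bla_refl HA 0); rewrite !subr0 sx0 subr0. Qed.

Lemma Pm_lin_aux c a b a2 b2 : le 0 a -> le 0 b -> le 0 a2 -> le 0 b2 ->
  Pm (c *: (a - b) + (a2 - b2)) = c *: (sx a - sx b) + (sx a2 - sx b2).
Proof.
move=> ha hb ha2 hb2.
have [hc|hc] := lerP 0 c.
  have -> : c *: (a - b) + (a2 - b2) = (c *: a + a2) - (c *: b + b2).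
    by rewrite opprD addrACA -scalerBr.
  have h1 := bla_scale HA hc ha; have h2 := bla_scale HA hc hb.
  rewrite P_dec; last 2 first.
    by have := leD2 HA h1 ha2; rewrite addr0.
    by have := leD2 HA h2 hb2; rewrite addr0.
  by rewrite !sxD // !sxZ // opprD addrACA -scalerBr.
have hc' : 0 <= - c by rewrite oppr_ge0 ltW.
have -> : c *: (a - b) + (a2 - b2) = ((- c) *: b + a2) - ((- c) *: a + b2).
  by rewrite opprD addrACA -scalerBr scaleNr -scalerN opprB.
have h1 := bla_scale HA hc' ha; have h2 := bla_scale HA hc' hb.
rewrite P_dec; last 2 first.
  by have := leD2 HA h2 ha2; rewrite addr0.
  by have := leD2 HA h1 hb2; rewrite addr0.
by rewrite !sxD // !sxZ // opprD addrACA -scalerBr scaleNr -scalerN opprB.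
Qed.

Lemma Pm_lin : is_linear Pm.
Proof.
move=> c x y.
have -> : c *: x + y = c *: (pos le x - neg le x) + (pos le y - neg le y).
  by rewrite !posneg.
apply: Pm_lin_aux; [exact: (pos_ge0 HA x)|exact: (neg_ge0 HA x)|
  exact: (pos_ge0 HA y)|exact: (neg_ge0 HA y)].
Qed.

Lemma Pm_bp : band_projection le Pm.
Proof.
split; first exact: Pm_lin.
split.
  move=> x; have := P_dec (sx_ge0 (pos_ge0 HA x)) (sx_ge0 (neg_ge0 HA x)).
  by rewrite !sx_idem //; [exact: neg_ge0 HA _|exact: pos_ge0 HA _].
move=> x hx; rewrite Pm_pos //; split; [exact: sx_ge0|exact: sx_le].
Qed.

End Main.

Theorem mainTheorem1 (R : realType) (A : completeNormedModType R)
  (le : A -> A -> Prop) (mul : A -> A -> A)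
  (HA : banach_lattice_algebra le mul) (Hoc : order_complete le)
  (Lambda : Type) (p : Lambda -> A)
  (Hp : forall l, BP_l le mul (p l) /\ BP_r le mul (p l))
  (Horth : forall a b, mul (p a) (p b) = (if `[< a = b >] then p a else 0))
  (Gamma : set (Lambda * Lambda)) :
  (forall x, le 0 x -> exists s,
     is_sup le (0 |` [set mul (mul (p ab.1) x) (p ab.2) | ab in Gamma]) s) /\
  (exists! P : A -> A, band_projection le P /\
     forall x, le 0 x ->
       is_sup le (0 |` [set mul (mul (p ab.1) x) (p ab.2) | ab in Gamma]) (P x)).
Proof.
have sxP' := sxP _ _ HA Hoc _ _ Hp Gamma.
have Pm_pos' := Pm_pos _ _ HA Hoc _ _ Hp Horth Gamma.
split.
  move=> x hx; exists (sx le mul _ p Gamma x); exact: sxP' hx.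
exists (Pm le mul _ p Gamma); split.
  split; first exact: (Pm_bp _ _ HA Hoc _ _ Hp Horth Gamma).
  move=> x hx; rewrite (Pm_pos' x hx); exact: sxP' hx.
move=> P' [[linP _] supP]; apply: funext => x.
have e z : le 0 z -> Pm le mul _ p Gamma z = P' z.
  move=> hz; rewrite (Pm_pos' z hz); exact: (is_sup_uniq HA _ _ _ (sxP' z hz) (supP z hz)).
rewrite -(posneg (le:=le) x) (linB (Pm_lin _ _ HA Hoc _ _ Hp Horth Gamma)) (linB linP).
have h1 := pos_ge0 HA x; have h2 := neg_ge0 HA x.
by rewrite !e.
Qed.
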